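(* Let $a=(p_a,Rd_a,Wt_a)\in\mathsf{Lab}$ and $\beta\in\mathsf{Lab}\uplus\underline{\mathsf{Lab}}$ with $\mathsf{und}(\beta)=(p_\beta,Rd_\beta,Wt_\beta)$, and assume $Wt_a\subseteq Rd_a$ and $Wt_\beta\subseteq Rd_\beta$. Suppose $A\to_{ann}^{\underline a}A'$ and $A\to_{ann}^{\beta}A''$ with $\underline a\;\iota_{lab}\;\beta$. Then there is an annotation DAG $A'''$ such that $A''\to_{ann}^{\underline a}A'''$ and $\mathsf{diff}(A\to_{ann}^{\underline a}A')=\mathsf{diff}(A''\to_{ann}^{\underline a}A''')$.
   Context: Fix a set $\mathcal{R}$ of memory resources. Let $\mathsf{PID}=(\mathbb{N}_+)^*$ be the set of finite words over the positive integers, with $\preceq$ the prefix order. An annotation DAG is a triple $A=(V,E_R,E_W)$ such that: (1) $V\subseteq(\mathsf{PID}\times\mathbb{N})\cup\{\bot\}$ is finite, $\bot\in V$, and $(p,n)\in V$ implies $(p,n')\in V$ for all $n'\le n$; (2) $E_R,E_W\subseteq V\times\mathcal{R}\times V$, and $(v',r,v),(v'',r,v)\in E_R\cup E_W$ implies $v'=v''$; (3) $E_R\cap E_W=\varnothing$ and the directed graph $(V,E_R\cup E_W)$ is acyclic; (4) if $(v',r,v)\in E_W$ and $v'\neq\bot$ then $(v'',r,v')\in E_W$ for some $v''$; (5) $(v,r,v'),(v,r,v'')\in E_W$ implies $v'=v''$. For $r\in\mathcal{R}$, $\mathsf{last}(r,E_W)$ is $\bot$ if $E_W$ has no edge labelled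 $r$, and otherwise is the final node of the unique path from $\bot$ consisting of all $E_W$-edges labelled $r$. For $p\in\mathsf{PID}$, $\mathsf{max}_p(V)=\max\{n:(p,n)\in V\}$, or $-1$ if there is no such $n$. Let $\mathsf{Lab}=\mathsf{PID}\times2^{\mathcal{R}}\times2^{\mathcal{R}}$ and $\underline{\mathsf{Lab}}=\{\underline{a}:a\in\mathsf{Lab}\}$ a disjoint copy; $\mathsf{und}(a)=\mathsf{und}(\underline a)=a$. For $a=(p,Rd,Wt)\in\mathsf{Lab}$ and annotation DAGs $A_1=(V_1,E_{R1},E_{W1})$, $A_2=(V_2,E_{R2},E_{W2})$, write $A_1\to_{ann}^{a}A_2$ iff, with $v=(p,\mathsf{max}_p(V_1)+1)$ and $\mathsf{newedge}(r,E_W,v)=(\mathsf{last}(r,E_W),r,v)$: $V_2=V_1\cup\{v\}$, $E_{R2}=E_{R1}\cup\{\mathsf{newedge}(r,E_{W1},v): r\in Rd\setminus Wt\}$, $E_{W2}=E_{W1}\cup\{\mathsf{newedge}(r,E_{W1},v): r\in Wt\}$; and write $A_2\to_{ann}^{\underline a}A_1$ iff $A_1\to_{ann}^{a}A_2$. For $\alpha,\beta\in\mathsf{Lab}\uplus\underline{\mathsf{Lab}}$ with $\mathsf{und}(\alpha)=(p_1,Rd_1,Wt_1)$, $\mathsf{und}(\beta)=(p_2,Rd_2,Wt_2)$, define $\alpha\;\iota_{lab}\;\beta$ iff $p_1\not\preceq p_2$, $p_2\not\preceq p_1$, $Rd_1\cap Wt_2=\varnothing$ and $Rd_2\cap Wt_1=\varnothing$.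 For $o:(V,E_R,E_W)\to_{ann}^{\alpha}(V',E'_R,E'_W)$, $\mathsf{diff}(o)=(V'\setminus V,E'_R\setminus E_R,E'_W\setminus E_W)$ if $\alpha\in\mathsf{Lab}$ and $\mathsf{diff}(o)=(V\setminus V',E_R\setminus E'_R,E_W\setminus E'_W)$ if $\alpha\in\underline{\mathsf{Lab}}$. (In the paper, labels arise from basic blocks for which the set of written resources is contained in the set of read resources; this is recorded here as the hypothesis $Wt\subseteq Rd$.) *)

(* Defs.v *)
From mathcomp Require Import all_boot.
From mathcomp Require Import boolp classical_sets cardinality.
From Stdlib Require Import Relation_Operators.

Set Implicit Arguments.
Unset Strict Implicit.
Unset Printing Implicit Defensive.

Local Open Scope classical_set_scope.

(* PID = finite words over positive integers, encoded as seq nat with all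
   entries positive; prefix order = seq's [prefix]. *)
Definition pid_ok (p : seq nat) : Prop := all (fun k => 0 < k)%N p.

(* Nodes: None is bottom, Some (p, n) is (p, n). *)
Definition node := option (seq nat * nat).

Section AnnDag.
Variable R : Type.   (* the set of memory resources *)

Definition edge := (node * R * node)%type.

Record annot := Annot { aV : set node; aER : set edge; aEW : set edge }.

Definition estep (A : annot) (x y : node) : Prop :=
  exists r, (aER A `|` aEW A) (x, r, y).

Definition is_annot (A : annot) : Prop :=
  [/\ finite_set (aV A), aV A None,
      (forall p n, aV A (Some (p, n)) -> pid_ok p) &
      (forall p n n', aV A (Some (p, n)) -> (n' <= n)%N -> aV A (Some (p, n')))] /\
  (forall x r y, (aER A `|` aEW A) (x, r, y) -> aV A x /\ aV A y) /\
  (forall x' x'' r y, (aER A `|` aEW A) (x', r, y) ->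
                      (aER A `|` aEW A) (x'', r, y) -> x' = x'') /\
  aER A `&` aEW A = set0 /\
  (forall v, ~ clos_trans node (estep A) v v) /\
  (forall x r y, aEW A (x, r, y) -> x <> None -> exists z, aEW A (z, r, x)) /\
  (forall x r y y', aEW A (x, r, y) -> aEW A (x, r, y') -> y = y').

(* [is_last r EW v]: v is the final node of a path starting at bottom whose
   edges are exactly the r-labelled edges of EW (the empty path, ending at
   bottom, when EW has no r-edge). *)
Definition is_last (r : R) (EW : set edge) (v : node) : Prop :=
  exists xs : seq node,
    last None xs = v /\
    forall x y, EW (x, r, y) <-> (x, y) \in zip (None :: xs) xs.

Definition lastw (r : R) (EW : set edge) : node :=
  xget None [set v | is_last r EW v].

(* max_p(V) + 1 (which is 0 when max_p(V) = -1) *)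
Definition next_idx (p : seq nat) (V : set node) : nat :=
  if pselect (exists n, V (Some (p, n)))
  then (xget 0%N [set n | V (Some (p, n)) /\
                          forall m, V (Some (p, m)) -> (m <= n)%N]).+1
  else 0%N.

Definition newedge (r : R) (EW : set edge) (v : node) : edge :=
  (lastw r EW, r, v).

Record lab := Lab { lpid : seq nat; lRd : set R; lWt : set R }.

Inductive dlab := Fwd of lab | Bwd of lab.

Definition und (al : dlab) : lab := match al with Fwd a => a | Bwd a => a end.

Definition ann_step (A1 : annot) (a : lab) (A2 : annot) : Prop :=
  let v := Some (lpid a, next_idx (lpid a) (aV A1)) in
  [/\ is_annot A1, is_annot A2,
      aV A2 = aV A1 `|` [set v],
      aER A2 = aER A1 `|` [set newedge r (aEW A1) v | r in lRd a `\` lWt a] &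
      aEW A2 = aEW A1 `|` [set newedge r (aEW A1) v | r in lWt a]].

Definition ann_dstep (A1 : annot) (al : dlab) (A2 : annot) : Prop :=
  match al with
  | Fwd a => ann_step A1 a A2
  | Bwd a => ann_step A2 a A1
  end.

Definition iota_lab (al be : dlab) : Prop :=
  let a := und al in let b := und be in
  [/\ ~~ prefix (lpid a) (lpid b), ~~ prefix (lpid b) (lpid a),
      lRd a `&` lWt b = set0 & lRd b `&` lWt a = set0].

Definition diff (A1 : annot) (al : dlab) (A2 : annot)
  : set node * set edge * set edge :=
  match al with
  | Fwd _ => (aV A2 `\` aV A1, aER A2 `\` aER A1, aEW A2 `\` aEW A1)
  | Bwd _ => (aV A1 `\` aV A2, aER A1 `\` aER A2, aEW A1 `\` aEW A2)
  end.

End AnnDag.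

(* Main.v *)
Require Import Defs.
From mathcomp Require Import all_boot.
From mathcomp Require Import boolp classical_sets cardinality.
From Stdlib Require Import Relation_Operators.
Local Open Scope classical_set_scope.
Set Implicit Arguments.

Lemma nat_max_ex (B : nat) (S : set nat) : (exists n, S n) ->
  (forall n, S n -> (n <= B)%N) -> exists k, S k /\ forall m, S m -> (m <= k)%N.
Proof.
elim: B => [|B IH] [n Sn] Hb.
  exists n; split => // m Sm; exact: leq_trans (Hb m Sm) (leq0n n).
case: (pselect (S B.+1)) => SB.
  by exists B.+1; split.
apply: IH; first by exists n.
move=> m Sm; have := Hb m Sm; rewrite leq_eqVlt ltnS; case/orP => // /eqP Em.
by exfalso; apply: SB; rewrite -Em.
Qed.

Lemma next_idx_gt p (V : set node) n : finite_set V -> V (Some (p, n)) ->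
  (n < next_idx p V)%N.
Proof.
move=> /finite_seqP [s Vs] Vn.
have Hb : forall m, V (Some (p, m)) -> (m <= \max_(x <- s) oapp snd 0%N x)%N.
  move=> m; rewrite Vs /= => ms.
  exact: (@leq_bigmax_seq _ s xpredT (fun x : node => oapp snd 0%N x) (Some (p, m)) ms).
have [k [Sk Hk]] : exists k, V (Some (p, k)) /\ forall m, V (Some (p, m)) -> (m <= k)%N.
  by apply: (@nat_max_ex _ [set m | V (Some (p, m))] _ Hb); exists n.
rewrite /next_idx; destruct (pselect (exists n0, V (Some (p, n0)))) as [ex|nex]; last by exfalso; apply: nex; exists n.
have [_ H] : [set n | V (Some (p, n)) /\ forall m, V (Some (p, m)) -> (m <= n)%N]
   (xget 0%N [set n | V (Some (p, n)) /\ forall m, V (Some (p, m)) -> (m <= n)%N]).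
  by apply: xgetPex; exists k.
exact: H n Vn.
Qed.

Definition nf (S : set nat) : nat :=
  if pselect (exists n, S n)
  then (xget 0%N [set n | S n /\ forall m, S m -> (m <= n)%N]).+1
  else 0%N.

Lemma next_idx_ext p (V V' : set node) :
  (forall n, V (Some (p, n)) <-> V' (Some (p, n))) -> next_idx p V = next_idx p V'.
Proof.
move=> H.
have E : (fun n => V (Some (p, n))) = (fun n => V' (Some (p, n))).
  by apply: funext => n; apply: propext; apply: H.
change (nf (fun n => V (Some (p, n))) = nf (fun n => V' (Some (p, n)))).
by rewrite E.
Qed.

Lemma lastw_ext (R : Type) r (EW EW' : set (edge R)) :
  (forall x y, EW (x, r, y) <-> EW' (x, r, y)) -> lastw r EW = lastw r EW'.
Proof.
move=> H; rewrite /lastw; congr (xget None _).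
apply: funext => v; apply: propext; split => -[xs [Hl H2]]; exists xs; split => // x y.
  by rewrite -H2 H.
by rewrite -H2 H.
Qed.

Lemma mem_zip_last (h z : node) (s : seq node) :
  (last h s, z) \in zip (h :: rcons s z) (rcons s z).
Proof.
elim: s h => [|y s IH] h /=; first by rewrite inE.
by rewrite inE IH orbT.
Qed.

Lemma lastw_edge (R : Type) r (EW : set (edge R)) :
  lastw r EW <> None -> exists y, EW (y, r, lastw r EW).
Proof.
rewrite /lastw; case: xgetP => [x _ [xs [Hl H]] | NP] //= xN.
move: Hl xN; case/lastP: xs H => [|s z] H; first by move=> <-.
rewrite last_rcons => <- _; exists (last None s); apply/H; exact: mem_zip_last.
Qed.

Lemma ct_mono (T : Type) (e1 e2 : T -> T -> Prop) :
  (forall x y, e1 x y -> e2 x y) -> forall x y, clos_trans T e1 x y -> clos_trans T e2 x y.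
Proof.
move=> H x y; elim => [u v /H|u v w _ IH1 _ IH2]; first exact: t_step.
exact: t_trans IH1 IH2.
Qed.

Lemma sub_annot (R : Type) (B C : annot R) :
  is_annot B ->
  aV C `<=` aV B -> aER C `<=` aER B -> aEW C `<=` aEW B ->
  aV C None ->
  (forall p n n', aV C (Some (p, n)) -> (n' <= n)%N -> aV C (Some (p, n'))) ->
  (forall x r y, (aER C `|` aEW C) (x, r, y) -> aV C x /\ aV C y) ->
  (forall x r y z, aEW C (x, r, y) -> x <> None -> aEW B (z, r, x) -> aEW C (z, r, x)) ->
  is_annot C.
Proof.
move=> [[fin Vn pid clos] [ends [uni [disj [acyc [pred4 det5]]]]]] sV sR sW CVn Cclos Cends C4.
have sU : forall e, (aER C `|` aEW C) e -> (aER B `|` aEW B) e.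
  by move=> e [/sR|/sW]; [left|right].
split; first split => //.
- exact: sub_finite_set sV fin.
- by move=> p n /sV; apply: pid.
split => //; split.
  by move=> x' x'' r y /sU H1 /sU H2; apply: uni H1 H2.
split.
  apply/seteqP; split => // e [/sR e1 /sW e2].
  by rewrite -disj; split.
split.
  move=> v H; apply: (acyc v); apply: (@ct_mono _ (estep C) (estep B) _ v v H).
  by move=> x y [r /sU Hr]; exists r.
split.
  move=> x r y Hxy xN; have [z Hz] := pred4 x r y (sW _ Hxy) xN.
  by exists z; apply: C4 Hxy xN Hz.
by move=> x r y y' /sW H1 /sW H2; apply: det5 H1 H2.
Qed.

Lemma annot_fin (R : Type) (A : annot R) : is_annot A -> finite_set (aV A).
Proof. by case=> -[]. Qed.

Lemma newedge_eq (R : Type) (r r' : R) EW (v x y : node) :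
  newedge r EW v = (x, r', y) -> [/\ lastw r EW = x, r = r' & v = y].
Proof. by rewrite /newedge; case=> -> -> ->. Qed.

Unset Implicit Arguments.
Theorem mainTheorem4 (R : Type) (a : lab R) (be : dlab R) (A A' A'' : annot R) :
  pid_ok (lpid a) -> pid_ok (lpid (und be)) ->
  lWt a `<=` lRd a -> lWt (und be) `<=` lRd (und be) ->
  ann_dstep A (Bwd a) A' -> ann_dstep A be A'' ->
  iota_lab (Bwd a) be ->
  exists A''' : annot R,
    ann_dstep A'' (Bwd a) A''' /\ diff A (Bwd a) A' = diff A'' (Bwd a) A'''.
Proof.
move=> _ _ Wa Wb HA HB [npab npba dRaWb dRbWa].
rewrite /= in npab npba dRaWb dRbWa.
case: HA => iA' iA HV HER HEW.
set v := Some (lpid a, next_idx (lpid a) (aV A')) in HV HER HEW.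
have pab : lpid a <> lpid (und be).
  by move=> E; move: npab; rewrite /= E prefix_refl.
have vnA' : ~ aV A' v.
  move=> H; have := @next_idx_gt _ _ _ (annot_fin iA') H; by rewrite ltnn.
have RaWb : forall r, lRd a r -> ~ lWt (und be) r.
  move=> r h1 h2; suff : (lRd a `&` lWt (und be)) r by rewrite dRaWb.
  by split.
have RbWa : forall r, lRd (und be) r -> ~ lWt a r.
  move=> r h1 h2; suff : (lRd (und be) `&` lWt a) r by rewrite dRbWa.
  by split.
case: be HB Wb pab RaWb RbWa {npab npba dRaWb dRbWa} => b /= HB Wb pab RaWb RbWa.
-
  case: HB => _ iA'' HV2 HER2 HEW2.
  set w := Some (lpid b, next_idx (lpid b) (aV A)) in HV2 HER2 HEW2.
  have vw : v <> w by case.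

  have Hnx : next_idx (lpid a) (aV A' `|` [set w]) = next_idx (lpid a) (aV A').
    apply: next_idx_ext => n; split => [[//|[E _]]|H]; last by left.
    by exfalso; apply: pab.
  have lwE : forall r, ~ lWt b r ->
      lastw r (aEW A' `|` [set newedge r0 (aEW A) w | r0 in lWt b]) = lastw r (aEW A').
    move=> r nr; apply: lastw_ext => x y; split => [[//|[r0 r0W /(@newedge_eq R) [_ E _]]]|H]; last by left.
    by exfalso; apply: nr; rewrite -E.
  have lastb : forall r, lRd b r -> ~ lastw r (aEW A) = v.
    move=> r rb E.
    have [y Hy] : exists y, aEW A (y, r, lastw r (aEW A)).
      by apply: lastw_edge; rewrite E.
    rewrite E HEW in Hy; case: Hy => [Hy|[r0 r0W /(@newedge_eq R) [_ Er _]]].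
      by apply: vnA'; case: iA' => _ [ends _]; apply: (ends _ _ _ (or_intror Hy)).2.
    by apply: (RbWa r rb); rewrite -Er.
  set C := Annot (aV A' `|` [set w])
     (aER A' `|` [set newedge r (aEW A) w | r in lRd b `\` lWt b])
     (aEW A' `|` [set newedge r (aEW A) w | r in lWt b]).
  have Cends : forall x r y, (aER C `|` aEW C) (x, r, y) -> aV C x /\ aV C y.
    rewrite /C /= => x r y H.
    have [H0|[rb [Ex Ey]]] : (aER A' `|` aEW A') (x, r, y) \/
        lRd b r /\ x = lastw r (aEW A) /\ y = w.
      case: H => [[H|[r0 [r0R _] /(@newedge_eq R) [<- <- <-]]]|[H|[r0 r0W /(@newedge_eq R) [<- <- <-]]]].
      + by left; left.
      + by right.
      + by left; right.
      + by right; split => //; apply: Wb.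
    + have [h1 h2] : aV A' x /\ aV A' y by case: iA' => _ [ends _]; exact: ends H0.
      by split; left.
    rewrite Ey; split; last by right.
    have [hx _] : aV A'' x /\ aV A'' y.
      case: iA'' => _ [ends _]; apply: (ends x r y).
      rewrite HER2 HEW2 Ex Ey.
      case: (pselect (lWt b r)) => rW.
        by right; right; exists r.
      by left; right; exists r.
    move: hx; rewrite HV2 HV => -[[h|h]|h].
    + by left.
    + by exfalso; apply: (lastb r rb); rewrite -Ex.
    + by right.
  have iC : is_annot C.
    apply: (@sub_annot R A'' C iA''); rewrite /C /=.
    - by move=> x [h|h]; rewrite HV2 HV; [left; left|right].
    - by move=> e [h|h]; rewrite HER2 HER; [left; left|right].
    - by move=> e [h|h]; rewrite HEW2; [left; rewrite HEW; left|right].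
    - by left; case: iA' => -[].
    - move=> p n n' [h|h] le.
        by left; case: iA' => -[_ _ _ cl] _; apply: cl h le.
      have : aV A'' (Some (p, n')).
        case: iA'' => -[_ _ _ cl] _; apply: cl le.
        by rewrite HV2; right.
      rewrite HV2 HV => -[[h'|h']|h'].
      + by left.
      + by exfalso; apply: pab; move: h h'; rewrite /w /v => -[-> _] [->].
      + by right.
    - exact: Cends.
    - move=> x r y z h xN.
      have [hx _] := Cends x r y (or_intror h).
      rewrite HEW2 => -[h'|h']; last by right.
      move: h'; rewrite HEW => -[h'|[r0 _ /(@newedge_eq R) [_ _ Ex]]].
      + by left.
      + by exfalso; move: hx; rewrite -Ex => -[|].
  exists C; rewrite /ann_dstep /diff; split.
    split => //=; rewrite Hnx -/v.
    - by rewrite HV2 HV setUAC.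
    - rewrite HER2 HER setUAC; congr (_ `|` _); apply: eq_imagel => r [rR _].
      by rewrite /newedge lwE //; apply: RaWb.
    - rewrite HEW2 {1}HEW setUAC; congr (_ `|` _); apply: eq_imagel => r rW.
      by rewrite /newedge lwE //; apply: RaWb; apply: Wa.
  congr (_, _, _); apply/seteqP; split => x /=.
  - rewrite HV => -[[h|h] nh] //; split; first by rewrite HV2 HV; left; right.
    by case => [|xw]; [rewrite h | apply: vw; rewrite -h].
  - rewrite HV2 => -[[h|h] nh]; last by exfalso; apply: nh; right.
    by split => // h'; apply: nh; left.
  - rewrite HER => -[[h|[r rR <-]] nh] //; split; first by rewrite HER2 HER; left; right; exists r.
    by case => // -[r' _ /(@newedge_eq R) [_ _ E]]; apply: vw; rewrite E.
  - rewrite HER2 => -[[h|h] nh]; last by exfalso; apply: nh; right.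
    by split => // h'; apply: nh; left.
  - rewrite HEW => -[[h|[r rR <-]] nh] //; split; first by rewrite HEW2 HEW; left; right; exists r.
    by case => // -[r' _ /(@newedge_eq R) [_ _ E]]; apply: vw; rewrite E.
  - rewrite HEW2 => -[[h|h] nh]; last by exfalso; apply: nh; right.
    by split => // h'; apply: nh; left.
-
  case: HB => iA'' _ HV2 HER2 HEW2.
  set w := Some (lpid b, next_idx (lpid b) (aV A'')) in HV2 HER2 HEW2.
  have vw : v <> w by case.
  have wnA'' : ~ aV A'' w.
    move=> H; have := @next_idx_gt _ _ _ (annot_fin iA'') H; by rewrite ltnn.
  have vA'' : aV A'' v.
    have : aV A v by rewrite HV; right.
    by rewrite HV2 => -[//|E]; exfalso; apply: vw.
  have wA' : aV A' w.
    have : aV A w by rewrite HV2; right.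
    by rewrite HV => -[//|E]; exfalso; apply: vw; rewrite E.
  have NBRsub : forall r, (lRd b `\` lWt b) r -> aER A' (newedge r (aEW A'') w).
    move=> r rr; have : aER A (newedge r (aEW A'') w) by rewrite HER2; right; exists r.
    by rewrite HER => -[//|[r0 _ /(@newedge_eq R) [_ _ /vw []]]].
  have NBsub : forall r, lWt b r -> aEW A' (newedge r (aEW A'') w).
    move=> r rr; have : aEW A (newedge r (aEW A'') w) by rewrite HEW2; right; exists r.
    by rewrite HEW => -[//|[r0 _ /(@newedge_eq R) [_ _ /vw []]]].
  have NARsub : forall r, (lRd a `\` lWt a) r -> aER A'' (newedge r (aEW A') v).
    move=> r rr; have : aER A (newedge r (aEW A') v) by rewrite HER; right; exists r.
    by rewrite HER2 => -[//|[r0 _ /(@newedge_eq R) [_ _ /esym /vw []]]].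
  have NAsub : forall r, lWt a r -> aEW A'' (newedge r (aEW A') v).
    move=> r rr; have : aEW A (newedge r (aEW A') v) by rewrite HEW; right; exists r.
    by rewrite HEW2 => -[//|[r0 _ /(@newedge_eq R) [_ _ /esym /vw []]]].
  have lwE : forall r, lRd a r -> lastw r (aEW A' `&` aEW A'') = lastw r (aEW A').
    move=> r rR; apply: lastw_ext => x y; split => [[]//|H]; split => //.
    have : aEW A (x, r, y) by rewrite HEW; left.
    rewrite HEW2 => -[//|[r0 r0W /(@newedge_eq R) [_ E _]]].
    by exfalso; apply: (RaWb r rR); rewrite -E.
  have Hnx : next_idx (lpid a) (aV A' `&` aV A'') = next_idx (lpid a) (aV A').
    apply: next_idx_ext => n; split => [[]//|H]; split => //.
    have : aV A (Some (lpid a, n)) by rewrite HV; left.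
    by rewrite HV2 => -[//|[E _]]; exfalso; apply: pab.
  set C := Annot (aV A' `&` aV A'') (aER A' `&` aER A'') (aEW A' `&` aEW A'').
  have iC : is_annot C.
    apply: (@sub_annot R A' C iA'); rewrite /C /=.
    - by move=> x [].
    - by move=> e [].
    - by move=> e [].
    - by split; [case: iA' => -[] | case: iA'' => -[]].
    - move=> p n n' [h1 h2] le; split.
        by case: iA' => -[_ _ _ cl] _; apply: cl h1 le.
      by case: iA'' => -[_ _ _ cl] _; apply: cl h2 le.
    - move=> x r y [[h1 h2]|[h1 h2]].
        have [a1 a2] : aV A' x /\ aV A' y by case: iA' => _ [ends _]; exact: ends (or_introl h1).
        have [b1 b2] : aV A'' x /\ aV A'' y by case: iA'' => _ [ends _]; exact: ends (or_introl h2).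
        by split; split.
      have [a1 a2] : aV A' x /\ aV A' y by case: iA' => _ [ends _]; exact: ends (or_intror h1).
      have [b1 b2] : aV A'' x /\ aV A'' y by case: iA'' => _ [ends _]; exact: ends (or_intror h2).
      by split; split.
    - move=> x r y z [h1 h2] xN hz.
      have [z' hz'] : exists z', aEW A'' (z', r, x).
        by case: iA'' => _ [_ [_ [_ [_ [p4 _]]]]]; apply: p4 h2 xN.
      have ezz : z = z'.
        case: iA => _ [_ [uni _]]; apply: (uni z z' r x).
        - by right; rewrite HEW; left.
        - by right; rewrite HEW2; left.
      by split => //; rewrite ezz.
  have IR : [set newedge r (aEW A' `&` aEW A'') v | r in lRd a `\` lWt a] =
            [set newedge r (aEW A') v | r in lRd a `\` lWt a].
    by apply: eq_imagel => r [rR _]; rewrite /newedge lwE.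
  have IW : [set newedge r (aEW A' `&` aEW A'') v | r in lWt a] =
            [set newedge r (aEW A') v | r in lWt a].
    by apply: eq_imagel => r rW; rewrite /newedge lwE //; apply: Wa.
  exists C; rewrite /ann_dstep /diff; split.
    split => //=; rewrite Hnx -/v.
    - apply/seteqP; split => x /=.
      + move=> h; have : aV A x by rewrite HV2; left.
        by rewrite HV => -[h'|->]; [left; split|right].
      + by move=> [[_ h]|->].
    - rewrite IR; apply/seteqP; split => e.
      + move=> h; have : aER A e by rewrite HER2; left.
        by rewrite HER => -[h'|h']; [left; split|right].
      + by move=> [[_ h]|[r rR <-]] //; exact: NARsub.
    - rewrite IW; apply/seteqP; split => e.
      + move=> h; have : aEW A e by rewrite HEW2; left.
        by rewrite HEW => -[h'|h']; [left; split|right].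
      + by move=> [[_ h]|[r rR <-]] //; exact: NAsub.
  congr (_, _, _); apply/seteqP; split => x /=.
  - move=> [h nh]; split; last by case => /nh.
    by move: h; rewrite HV2 => -[//|E]; exfalso; apply: nh; rewrite E.
  - move=> [h nh]; split; first by rewrite HV2; left.
    by move=> h'; apply: nh.
  - move=> [h nh]; split; last by case => /nh.
    move: h; rewrite HER2 => -[//|[r rR E]]; exfalso; apply: nh; rewrite -E; exact: NBRsub.
  - move=> [h nh]; split; first by rewrite HER2; left.
    by move=> h'; apply: nh.
  - move=> [h nh]; split; last by case => /nh.
    move: h; rewrite HEW2 => -[//|[r rR E]]; exfalso; apply: nh; rewrite -E; exact: NBsub.
  - move=> [h nh]; split; first by rewrite HEW2; left.
    by move=> h'; apply: nh.
Qed.
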